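(* Let $\delta\ge1$ and suppose $G=(V,E,w)$ is a $\delta$-perturbation of a graph $G^*=(V,E,w^* )$ with perfect HC-structure. Let $\mathcal{R}$ be the set of constraints $\{i,j|k\}$, over all triples of distinct indices $i,j,k$, such that $w_{ij}>\delta^2\max\{w_{ik},w_{jk}\}$. Then there exists a binary HC-tree for $V$ that is consistent with every constraint in $\mathcal{R}$.
   Context: $G$ is a $\delta$-perturbation of $G^*$ if $\frac1\delta w(e)\le w^*(e)\le\delta w(e)$ for all $e\in E$; weights are symmetric, nonnegative, and $0$ on non-edges. An HC-tree for $V=\{v_1,\dots,v_n\}$ is a rooted tree with leaf set $V$. A tree $T$ is consistent with constraint $\{i,j|k\}$ if $\mathrm{LCA}(v_i,v_j)$ is a proper descendant of $\mathrm{LCA}(v_i,v_j,v_k)$ (relation $\{i,j|k\}$ holds in $T$); relation $\{i|j|k\}$ holds if $\mathrm{LCA}(v_i,v_j)=\mathrm{LCA}(v_j,v_k)=\mathrm{LCA}(v_i,v_j,v_k)$. Triplet cost $c_T(i,j,k)$: $w_{ik}+w_{jk}$ if $\{i,j|k\}$; $w_{ij}+w_{jk}$ if $\{i,k|j\}$; $w_{ij}+w_{ik}$ if $\{j,k|i\}$; $w_{ij}+w_{jk}+w_{ik}$ if $\{i|j|k\}$. $\mathrm{TC}(T)=\sum c_T(i,j,k)$, $\mathrm{BC}=\sum\min\{w_{ij}+w_{ik},w_{ij}+w_{jk},w_{ik}+w_{jk}\}$ over unordered triples of distinct indices; $\rho(T)=\mathrm{TC}(T)/\mathrm{BC}$ (with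 $0/0=1$, $x/0=+\infty$ for $x>0$), $\rho^*=\min_T\rho(T)$; perfect HC-structure means $\rho^*=1$ (computed with weights $w^*$ for $G^*$). *)

(* Defs.v *)
From mathcomp Require Import all_boot all_order all_algebra.
From mathcomp Require Import reals constructive_ereal.
Set Implicit Arguments. Unset Strict Implicit. Unset Printing Implicit Defensive.
Import Order.TTheory GRing.Theory Num.Theory.

Inductive hctree (T : Type) : Type :=
| Leaf of T
| Node of seq (hctree T).
Arguments Leaf {T}.
Arguments Node {T}.

Section Trees.
Variable T : eqType.

Fixpoint leaves (t : hctree T) : seq T :=
  match t with
  | Leaf v => [:: v]
  | Node cs => flatten (map leaves cs)
  end.

Fixpoint wf_tree (t : hctree T) : bool :=
  match t with
  | Leaf _ => true
  | Node cs => (1 < size cs) && all wf_tree cs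
  end.

Fixpoint binary_tree (t : hctree T) : bool :=
  match t with
  | Leaf _ => true
  | Node cs => (size cs == 2) && all binary_tree cs
  end.

(* each leaf paired with its address (path of child indices from the root) *)
Fixpoint leaf_addrs (t : hctree T) : seq (T * seq nat) :=
  match t with
  | Leaf v => [:: (v, [::])]
  | Node cs =>
      let fix go (i : nat) (l : seq (hctree T)) : seq (T * seq nat) :=
        match l with
        | [::] => [::]
        | c :: l' => map (fun p => (p.1, i :: p.2)) (leaf_addrs c) ++ go i.+1 l'
        end in
      go 0 cs
  end.

Definition addr (t : hctree T) (v : T) : seq nat :=
  (nth (v, [::]) (leaf_addrs t) (find (fun p => p.1 == v) (leaf_addrs t))).2.

(* longest common prefix of two addresses = address of the lowest common ancestor *)
Fixpoint lcp (s1 s2 : seq nat) : seq nat :=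
  match s1, s2 with
  | x :: s1', y :: s2' => if x == y then x :: lcp s1' s2' else [::]
  | _, _ => [::]
  end.

Definition LCA2 (t : hctree T) (a b : T) : seq nat := lcp (addr t a) (addr t b).
Definition LCA3 (t : hctree T) (a b c : T) : seq nat :=
  lcp (lcp (addr t a) (addr t b)) (addr t c).

Definition proper_desc (x y : seq nat) : bool := prefix y x && (x != y).

(* relation {a,b|c} holds in t *)
Definition rel_sep (t : hctree T) (a b c : T) : bool :=
  proper_desc (LCA2 t a b) (LCA3 t a b c).

Definition rel_star (t : hctree T) (a b c : T) : bool :=
  (LCA2 t a b == LCA3 t a b c) && (LCA2 t b c == LCA3 t a b c).

End Trees.

(* an HC-tree for V = 'I_n: leaf set is exactly V (each vertex once) *)
Definition hc_tree (n : nat) (t : hctree 'I_n) : bool :=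
  wf_tree t && perm_eq (leaves t) (enum 'I_n).

Definition binary_hc_tree (n : nat) (t : hctree 'I_n) : bool :=
  binary_tree t && perm_eq (leaves t) (enum 'I_n).

Section Costs.
Local Open Scope ring_scope.
Variables (R : realType) (n : nat).
Implicit Types (w : 'I_n -> 'I_n -> R) (t : hctree 'I_n).

(* triplet cost c_T(i,j,k); for distinct leaves exactly one of the four
   relations holds *)
Definition triplet_cost w t (i j k : 'I_n) : R :=
  if rel_sep t i j k then w i k + w j k
  else if rel_sep t i k j then w i j + w j k
  else if rel_sep t j k i then w i j + w i k
  else if rel_star t i j k then w i j + w j k + w i k
  else 0.

(* sums over unordered triples of distinct indices: i < j < k *)
Definition TC w t : R :=
  \sum_(i < n) \sum_(j < n | (i < j)%N) \sum_(k < n | (j < k)%N) triplet_cost w t i j k.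

Definition BC w : R :=
  \sum_(i < n) \sum_(j < n | (i < j)%N) \sum_(k < n | (j < k)%N)
     Num.min (w i j + w i k) (Num.min (w i j + w j k) (w i k + w j k)).

(* rho(T) = TC/BC with 0/0 = 1 and x/0 = +oo *)
Definition rho w t : \bar R :=
  if BC w == 0 :> R then (if TC w t == 0 :> R then (1%:E)%E else +oo%E)
  else ((TC w t / BC w)%:E)%E.

Definition perfect_HC w : Prop :=
  exists t, [/\ hc_tree t, rho w t = (1%:E)%E
           & forall t', hc_tree t' -> (rho w t <= rho w t')%E].

Definition weight_fn (E : rel 'I_n) w : Prop :=
  [/\ forall i j, w i j = w j i, forall i j, 0 <= w i j
    & forall i j, ~~ E i j -> w i j = 0].

Definition perturbation (E : rel 'I_n) (delta : R) w ws : Prop :=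
  forall i j, E i j -> w i j / delta <= ws i j <= delta * w i j.

End Costs.

(* Main.v *)
Require Import Defs.
From mathcomp Require Import all_boot all_order all_algebra.
From mathcomp Require Import reals constructive_ereal.
Import Order.TTheory GRing.Theory Num.Theory.

Set Implicit Arguments.
Unset Strict Implicit.
Section TreeAux.
Variable T : eqType.
Notation tr := (hctree T).
Implicit Types (i j k u v : T) (cs : seq tr) (t : tr).

Fixpoint allP (P : tr -> Prop) (cs : seq tr) : Prop :=
  match cs with [::] => True | c :: cs' => P c /\ allP P cs' end.

Lemma tree_ind' (P : tr -> Prop) :
  (forall v, P (Leaf v)) -> (forall cs, allP P cs -> P (Node cs)) -> forall t, P t.
Proof.
move=> HL HN; fix IH 1; intros [v|cs]; [exact: HL|].
apply: HN; induction cs as [|c cs IHc]; [exact: I| split; [exact: IH | exact: IHc]].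
Qed.

Lemma allP_nth P cs n : allP P cs -> n < size cs -> P (nth (Node [::]) cs n).
Proof. elim: cs n => [|c cs IH] [|n] //= [Hc Hcs] H; [exact: Hc | exact: IH]. Qed.

Fixpoint cat_tree (cs : seq tr) : tr :=
  match cs with
  | [::] => Node [::]
  | c :: cs' => if cs' is [::] then c else Node [:: c; cat_tree cs']
  end.

Fixpoint bin (t : tr) : tr :=
  match t with Leaf v => Leaf v | Node cs => cat_tree (map bin cs) end.

Fixpoint goA (i : nat) (l : seq tr) : seq (T * seq nat) :=
  match l with
  | [::] => [::]
  | c :: l' => map (fun p => (p.1, i :: p.2)) (leaf_addrs c) ++ goA i.+1 l'
  end.

Lemma leaf_addrs_Node cs : leaf_addrs (Node cs) = goA 0 cs.
Proof. by []. Qed.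

Lemma leaf_addrs_fst (t : tr) : map fst (leaf_addrs t) = leaves t.
Proof.
elim/tree_ind': t => [v|cs IH] //; rewrite leaf_addrs_Node /=.
elim: cs 0 IH => [|c cs IHc] i //= [Hc Hcs].
by rewrite map_cat -map_comp /= Hc (IHc i.+1 Hcs).
Qed.

Definition idx (v : T) (cs : seq tr) := find (fun c => v \in leaves c) cs.

Lemma mem_flat v cs : (v \in flatten (map (@leaves T) cs)) = has (fun c => v \in leaves c) cs.
Proof. by elim: cs => [|c cs IH] //=; rewrite mem_cat IH. Qed.

Lemma idx_lt v cs : v \in flatten (map (@leaves T) cs) -> idx v cs < size cs.
Proof. by rewrite mem_flat has_find. Qed.

Lemma addr_goA (i : nat) cs v : v \in flatten (map (@leaves T) cs) ->
  (nth (v,[::]) (goA i cs) (find (fun p => p.1 == v) (goA i cs))).2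
  = (i + idx v cs) :: addr (nth (Node [::]) cs (idx v cs)) v.
Proof.
elim: cs i => [|c cs IH] i //=; rewrite mem_cat /idx /= => Hv.
rewrite find_cat has_map.
have Hh : has (preim (fun p : T * seq nat => (p.1, i :: p.2)) (fun p => p.1 == v)) (leaf_addrs c)
   = (v \in leaves c).
  by rewrite -leaf_addrs_fst; elim: (leaf_addrs c) => [|p L IHL] //=; rewrite in_cons IHL eq_sym.
rewrite Hh.
case Hc: (v \in leaves c) => /=.
  rewrite nth_cat size_map find_map.
  have Hlt : find (preim (fun p : T * seq nat => (p.1, i :: p.2)) (fun p => p.1 == v)) (leaf_addrs c) < size (leaf_addrs c).
    by rewrite -has_find Hh.
  rewrite Hlt (nth_map (v, [::])) //= addn0.
  by rewrite /addr.
rewrite Hc /= in Hv.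
rewrite nth_cat size_map ltnNge leq_addr /= addKn IH //.
by rewrite /idx addSnnS.
Qed.

Lemma addr_Node cs v : v \in leaves (Node cs) ->
  addr (Node cs) v = idx v cs :: addr (nth (Node [::]) cs (idx v cs)) v.
Proof. by move=> Hv; rewrite {1}/addr leaf_addrs_Node addr_goA. Qed.

Lemma rel_sep_Leaf u i j k : rel_sep (Leaf u) i j k = false.
Proof.
rewrite /rel_sep /LCA2 /LCA3 /addr /=.
by case: (u == i); case: (u == j); case: (u == k).
Qed.

Lemma rel_sep_Node cs i j k :
  i \in leaves (Node cs) -> j \in leaves (Node cs) -> k \in leaves (Node cs) ->
  rel_sep (Node cs) i j k =
  if idx i cs == idx j cs then
    (if idx i cs == idx k cs then rel_sep (nth (Node [::]) cs (idx i cs)) i j k else true)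
  else false.
Proof.
move=> Hi Hj Hk; rewrite /rel_sep /LCA2 /LCA3 !addr_Node //=.
case: eqP => [Hij|Hij] /=; last by [].
rewrite -Hij; case: eqP => [Hik|Hik] /=.
  rewrite -Hik /proper_desc /= eqxx /= eqseq_cons eqxx //.
by rewrite /proper_desc /=.
Qed.

Lemma leaves_cat cs : leaves (cat_tree cs) = flatten (map (@leaves T) cs).
Proof.
elim: cs => [|c cs IH] //=; case: cs IH => [|c' cs] IH /=; first by rewrite cats0.
by rewrite cats0 IH.
Qed.

Lemma leaves_bin t : leaves (bin t) = leaves t.
Proof.
elim/tree_ind': t => [v|cs IH] //=; rewrite leaves_cat -map_comp.
by congr flatten; elim: cs IH => [|c cs IHc] //= [-> /IHc ->].
Qed.

Lemma idx_cons v c cs : idx v (c :: cs) = if v \in leaves c then 0 else (idx v cs).+1.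
Proof. by []. Qed.

Lemma rel_sep_cat cs i j k :
  i \in flatten (map (@leaves T) cs) -> j \in flatten (map (@leaves T) cs) ->
  k \in flatten (map (@leaves T) cs) ->
  idx i cs = idx j cs ->
  (idx i cs != idx k cs) || rel_sep (nth (Node [::]) cs (idx i cs)) i j k ->
  rel_sep (cat_tree cs) i j k.
Proof.
elim: cs => [|c cs IH] //.
case: cs IH => [|c' cs'] IH.
  rewrite /idx /= !cats0 => -> -> -> _ //.
have E : cat_tree (c :: c' :: cs') = Node [:: c; cat_tree (c' :: cs')] by [].
rewrite E; move: (c' :: cs') IH => cs IH.
have EL : leaves (Node [:: c; cat_tree cs]) = leaves c ++ flatten (map (@leaves T) cs).
  by change (leaves c ++ (leaves (cat_tree cs) ++ [::]) = leaves c ++ flatten (map (@leaves T) cs)); rewrite cats0 leaves_cat.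
have Ef : flatten (map (@leaves T) (c :: cs)) = leaves c ++ flatten (map (@leaves T) cs) by [].
have I0 : forall v, idx v [::] = 0 by [].
rewrite Ef => Hi Hj Hk; rewrite rel_sep_Node ?EL //.
rewrite !idx_cons !I0 !leaves_cat.
case Hic: (i \in leaves c); case Hjc: (j \in leaves c); case Hkc: (k \in leaves c);
  move: Hi Hj Hk; rewrite !mem_cat Hic Hjc Hkc /= => Hi Hj Hk; rewrite ?Hi ?Hj ?Hk //=.
move=> [Hij] H.
by apply: IH.
Qed.

Lemma idx_map_bin v cs : idx v (map bin cs) = idx v cs.
Proof. by rewrite /idx find_map; apply: eq_find => c /=; rewrite leaves_bin. Qed.

Lemma flat_map_bin cs : flatten (map (@leaves T) (map bin cs)) = flatten (map (@leaves T) cs).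
Proof. by rewrite -map_comp; congr flatten; apply: eq_map => c /=; rewrite leaves_bin. Qed.

Lemma rel_sep_bin t i j k : i \in leaves t -> j \in leaves t -> k \in leaves t ->
  rel_sep t i j k -> rel_sep (bin t) i j k.
Proof.
elim/tree_ind': t => [v|cs IH]; first by rewrite rel_sep_Leaf.
move=> Hi Hj Hk; rewrite rel_sep_Node //= => H.
apply: rel_sep_cat; rewrite ?flat_map_bin ?idx_map_bin //.
  by case: eqP H.
case: eqP H => // Hij; case: eqP => // Hik /= H.
rewrite (nth_map (Node [::])); last exact: idx_lt.
have Hlt := idx_lt Hi.
have memN : forall v, v \in flatten (map (@leaves T) cs) -> v \in leaves (nth (Node [::]) cs (idx v cs)).
  by move=> v; rewrite mem_flat => Hv; exact: (nth_find (Node [::]) Hv).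
apply: (allP_nth IH Hlt) => //.
- exact: memN.
- by rewrite Hij; exact: memN.
- by rewrite Hik; exact: memN.
Qed.

Lemma binary_cat cs : 0 < size cs -> all (@binary_tree T) cs -> binary_tree (cat_tree cs).
Proof.
elim: cs => [|c cs IH] //= _ /andP [Hc Hcs].
case: cs IH Hcs => [|c' cs'] IH Hcs //.
by rewrite /= Hc /= andbT; apply: IH.
Qed.

Lemma binary_bin t : wf_tree t -> binary_tree (bin t).
Proof.
elim/tree_ind': t => [v|cs IH] //= /andP [Hs Ha].
apply: binary_cat; first by case: cs Hs {IH Ha}.
elim: cs IH Ha {Hs} => [|c cs IHc] //= [Hc Hcs] /andP [Hwc Hwcs].
by rewrite Hc //= IHc.
Qed.
End TreeAux.

Lemma lcpC (a b : seq nat) : lcp a b = lcp b a.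
Proof.
elim: a b => [|x a IH] [|y b] //=; rewrite eq_sym.
by case: eqP => [->|] //; rewrite IH.
Qed.

Lemma lcpA (a b c : seq nat) : lcp (lcp a b) c = lcp a (lcp b c).
Proof.
elim: a b c => [|x a IH] [|y b] [|z c] //=.
- by case: (x == y).
- have [<-|Hxy] := eqVneq x y; have [<-|Hxz] := eqVneq x z => /=;
    rewrite ?eqxx ?IH //; first by rewrite (negbTE Hxz).
  - by rewrite eq_sym (negbTE Hxy).
  - by case: eqVneq => [Eyz|] //=; rewrite (negbTE Hxy).
Qed.

Lemma lcp_prefix (a b : seq nat) : prefix (lcp a b) a.
Proof.
elim: a b => [|x a IH] [|y b] //=.
by case: eqP => //= ->; rewrite eqxx IH.
Qed.

Definition L3 (a b c : seq nat) := lcp (lcp a b) c.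

Lemma excl (a b c : seq nat) : lcp a b != L3 a b c -> lcp a c = L3 a b c.
Proof.
rewrite /L3; elim: a b c => [|x a IH] [|y b] [|z c] //=.
- by case: (x == y).
- case: (x =P y) => [_|] /=; last by [].
  case: (x =P z) => [_|] //=.
  by rewrite eqseq_cons eqxx /= => /IH ->.
Qed.

Lemma L3_213 a b c : L3 b a c = L3 a b c. Proof. by rewrite /L3 (lcpC b a). Qed.
Lemma L3_132 a b c : L3 a c b = L3 a b c.
Proof. by rewrite /L3 !lcpA (lcpC c b). Qed.

From mathcomp Require Import ring lra.

Lemma excl3 (a b c : seq nat) :
  [/\ lcp a b != L3 a b c -> lcp a c = L3 a b c,
      lcp a b != L3 a b c -> lcp b c = L3 a b c &
      lcp a c != L3 a b c -> lcp b c = L3 a b c].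
Proof.
split.
- exact: excl.
- by rewrite -L3_213 (lcpC a b) => /excl.
- have := @excl c a b.
  by rewrite (lcpC c a) (lcpC c b) L3_213 L3_132.
Qed.

Section Cost.
Local Open Scope ring_scope.
Variable R : realType.

Definition cost' (wab wac wbc : R) (a b c : seq nat) : R :=
  wab + wac + wbc - (if lcp a b != L3 a b c then wab
                     else if lcp a c != L3 a b c then wac
                     else if lcp b c != L3 a b c then wbc else 0).

Definition m3 (ab ac bc : R) := Num.min (ab + ac) (Num.min (ab + bc) (ac + bc)).

Lemma m3_213 ab ac bc : m3 ab ac bc = m3 ab bc ac.
Proof. by rewrite /m3 (addrC bc ac) minCA. Qed.

Lemma m3_132 ab ac bc : m3 ab ac bc = m3 ac ab bc.
Proof. by rewrite /m3 (addrC ac ab) (minC (ac + bc)). Qed.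

Lemma cost'_213 wab wac wbc a b c : cost' wab wac wbc a b c = cost' wab wbc wac b a c.
Proof.
rewrite /cost' (lcpC b a) (L3_213 a b c).
have [H1 H2 H3] := excl3 a b c.
case: (lcp a b =P L3 a b c) => //= Hab; case: (lcp a c =P L3 a b c) => //= Hac;
  case: (lcp b c =P L3 a b c) => //= Hbc; try ring.
by exfalso; apply: Hbc; apply: H3; apply/eqP.
Qed.

Lemma cost'_132 wab wac wbc a b c : cost' wab wac wbc a b c = cost' wac wab wbc a c b.
Proof.
rewrite /cost' (lcpC c b) (L3_132 a b c).
have [H1 H2 H3] := excl3 a b c.
case: (lcp a b =P L3 a b c) => //= Hab; case: (lcp a c =P L3 a b c) => //= Hac;
  case: (lcp b c =P L3 a b c) => //= Hbc; try ring.
all: by exfalso; move: (H1 (introN eqP Hab)).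
Qed.

Lemma cost_ge ab ac bc a b c : 0 <= ab -> 0 <= ac -> 0 <= bc ->
  m3 ab ac bc <= cost' ab ac bc a b c.
Proof.
move=> H1 H2 H3; rewrite /cost' /m3 !ge_min.
case: ifP => _; first by apply/orP; right; apply/orP; right; lra.
case: ifP => _; first by apply/orP; right; apply/orP; left; lra.
case: ifP => _; first by apply/orP; left; lra.
by apply/orP; left; lra.
Qed.

Lemma cost_key ab ac bc a b c : 0 <= ac -> 0 <= bc -> ac < ab -> bc < ab ->
  cost' ab ac bc a b c = m3 ab ac bc -> lcp a b != L3 a b c.
Proof.
move=> H2 H3 H4 H5; rewrite /cost'.
have Hm : m3 ab ac bc <= ac + bc by rewrite /m3 !ge_min lexx !orbT.
case: ifP => // _.
case: ifP => _; first lra.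
case: ifP => _; lra.
Qed.
End Cost.
Arguments cost' {R}.
Arguments m3 {R}.
From mathcomp Require Import ring lra zify.
Import Order.TTheory GRing.Theory Num.Theory.
Local Open Scope ring_scope.

Lemma tc_cost (R : realType) n (w : 'I_n -> 'I_n -> R) t i j k :
  triplet_cost w t i j k = cost' (w i j) (w i k) (w j k) (addr t i) (addr t j) (addr t k).
Proof.
rewrite /triplet_cost /rel_sep /rel_star /proper_desc /LCA2 /LCA3 /cost'.
set a := addr t i; set b := addr t j; set c := addr t k.
rewrite !lcp_prefix /=.
have -> : lcp (lcp a c) b = L3 a b c by rewrite -(L3_132 a b c).
have -> : lcp (lcp b c) a = L3 a b c by rewrite lcpC /L3 lcpA.
rewrite -/(L3 a b c).
case: (lcp a b =P L3 a b c) => //= Hab; first (case: (lcp a c =P L3 a b c) => //= Hac;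
  first (case: (lcp b c =P L3 a b c) => //= Hbc)).
all: rewrite ?Hab ?eqxx /=; ring.
Qed.

Lemma rel_sep_lcp (n : nat) (t : hctree 'I_n) i j k :
  rel_sep t i j k = (lcp (addr t i) (addr t j) != L3 (addr t i) (addr t j) (addr t k)).
Proof. by rewrite /rel_sep /proper_desc /LCA2 /LCA3 lcp_prefix. Qed.

Theorem lemma6 (R : realType) (n : nat) (E : rel 'I_n)
    (w ws : 'I_n -> 'I_n -> R) (delta : R) :
  1 <= delta ->
  (forall i j : 'I_n, E i j = E j i) -> (forall i : 'I_n, ~~ E i i) ->
  weight_fn E w -> weight_fn E ws ->
  perturbation E delta w ws ->
  perfect_HC ws ->
  exists t : hctree 'I_n, binary_hc_tree t /\
    forall i j k : 'I_n, i != j -> i != k -> j != k ->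
      delta ^+ 2 * Num.max (w i k) (w j k) < w i j ->
      rel_sep t i j k.
Proof.
move=> Hd Esym Eirr [wsym wge wE] [wssym wsge wsE] Hpert [t [Ht Hrho _]].
move: Ht => /andP [Hwf Hperm].
exists (bin t); split.
  by rewrite /binary_hc_tree binary_bin //= leaves_bin.
have memt : forall v, v \in leaves t by move=> v; rewrite (perm_mem Hperm) mem_enum.
pose D x y z := triplet_cost ws t x y z - m3 (ws x y) (ws x z) (ws y z).
have Dge : forall x y z, 0 <= D x y z.
  by move=> x y z; rewrite /D subr_ge0 tc_cost; apply: cost_ge.
have TCBC : TC ws t = BC ws.
  move: Hrho; rewrite /rho; case: (BC ws =P 0) => HB.
    by case: (TC ws t =P 0) => HT // _; rewrite HT HB.
  by move=> [] /divr1_eq.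
have Hsum : \sum_(x < n) \sum_(y < n | (x < y)%N) \sum_(z < n | (y < z)%N) D x y z = 0.
  transitivity (TC ws t - BC ws); last by rewrite TCBC subrr.
  rewrite /TC /BC -sumrB; apply: eq_bigr => x _; rewrite -sumrB; apply: eq_bigr => y _.
  by rewrite -sumrB.
have D0 : forall x y z : 'I_n, (x < y)%N -> (y < z)%N -> D x y z = 0.
  move=> x y z Hxy Hyz.
  have Hx : \sum_(y < n | (x < y)%N) \sum_(z < n | (y < z)%N) D x y z = 0.
    apply: (psumr_eq0P _ Hsum) => // x' _.
    by apply: sumr_ge0 => y' _; apply: sumr_ge0 => z' _.
  have Hy : \sum_(z < n | (y < z)%N) D x y z = 0.
    apply: (psumr_eq0P _ Hx) => // y' _.
    by apply: sumr_ge0 => z' _.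
  by apply: (psumr_eq0P _ Hy).
have D12 : forall x y z, D x y z = D y x z.
  by move=> x y z; rewrite /D !tc_cost cost'_213 m3_213 (wssym y x).
have D23 : forall x y z, D x y z = D x z y.
  by move=> x y z; rewrite /D !tc_cost cost'_132 m3_132 (wssym z y).
have Dall : forall x y z : 'I_n, x != y -> x != z -> y != z -> D x y z = 0.
  move=> x y z; rewrite -!(inj_eq val_inj) /= => Hxy Hxz Hyz.
  case: (ltngtP x y) => H1; case: (ltngtP y z) => H2; case: (ltngtP x z) => H3;
    try (exfalso; lia).
  all: try first [ exact: D0 | rewrite D12; exact: D0 | rewrite D23; exact: D0
             | rewrite D12 D23; exact: D0 | rewrite D23 D12; exact: D0
             | rewrite D12 D23 D12; exact: D0 ].
move=> i j k Hij Hik Hjk Hw.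
apply: rel_sep_bin; [exact: memt.. |].
have Dz := Dall i j k Hij Hik Hjk.
have dpos : 0 < delta by lra.
set M := Num.max (w i k) (w j k) in Hw.
have M1 : w i k <= M by rewrite le_max lexx.
have M2 : w j k <= M by rewrite le_max lexx orbT.
have M0 : 0 <= M by apply: le_trans M1.
have d2 : 0 <= delta ^+ 2 * M by apply: mulr_ge0 => //; apply: exprn_ge0; lra.
have Eij : E i j.
  apply/negPn/negP => HE; move: Hw; rewrite (wE _ _ HE); lra.
have Hws_ij : w i j / delta <= ws i j by case/andP: (Hpert i j Eij).
have Hwsx : forall x, ws x k <= delta * w x k.
  move=> x; case Ex: (E x k); first by case/andP: (Hpert x k Ex).
  rewrite (wsE x k (negbT Ex)); apply: mulr_ge0 => //; lra.
have key : delta * M < w i j / delta.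
  by rewrite ltr_pdivlMr // mulrC mulrA -expr2.
have K1 : delta * w i k <= delta * M by apply: ler_wpM2l => //; lra.
have K2 : delta * w j k <= delta * M by apply: ler_wpM2l => //; lra.
have Hik' := Hwsx i; have Hjk' := Hwsx j.
rewrite rel_sep_lcp.
apply: (@cost_key R (ws i j) (ws i k) (ws j k)) => //; try lra.
by move: Dz; rewrite /D tc_cost => /eqP; rewrite subr_eq0 => /eqP.
Qed.
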